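(* Let $G=G_1\ast\cdots\ast G_k\ast F_N$ be a countable group ($F_N$ free of finite rank), $\mathcal{F}=\{[G_1],\dots,[G_k]\}$. Let $T$ be a minimal $(G,\mathcal{F})$-tree and $(T_n)_{n\in\mathbb{N}}$ a sequence of minimal $(G,\mathcal{F})$-trees converging to $T$ in the equivariant Gromov–Hausdorff topology. Let $g\in G$ and assume some power $g^p$ ($p\ge 1$) fixes a nondegenerate arc $I$ in $T$. If $g$ is hyperbolic in $T_n$ for all sufficiently large $n$, then $g$ fixes $I$.
   Context: Peripheral: conjugate into some $G_i$. $(G,\mathcal{F})$-tree: $\mathbb{R}$-tree with isometric $G$-action where every peripheral subgroup fixes a unique point; minimal: no proper nonempty invariant subtree. $g$ is hyperbolic if it fixes no point. Equivariant Gromov–Hausdorff convergence: for every finite $K\subset T$, finite $P\subset G$, $\epsilon>0$, for all large $n$ there are finite $K_n\subset T_n$ and $R\subseteq K\times K_n$ with surjective projections such that $|d_T(gx,hy)-d_{T_n}(gx',hy')|<\epsilon$ for all $(x,x'),(y,y')\in R$, $g,h\in P$. *)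

(* Defs.v *)
From Stdlib Require Import Reals Lra Lia List ZArith.
Open Scope R_scope.

Record Grp := {
  gcar :> Type;
  gmul : gcar -> gcar -> gcar;
  ginv : gcar -> gcar;
  gone : gcar;
  gmul_assoc : forall a b c, gmul a (gmul b c) = gmul (gmul a b) c;
  gmul_1l : forall a, gmul gone a = a;
  gmul_1r : forall a, gmul a gone = a;
  gmul_Vl : forall a, gmul (ginv a) a = gone;
  gmul_Vr : forall a, gmul a (ginv a) = gone
}.
Arguments gmul {_}. Arguments ginv {_}. Arguments gone {_}.

Fixpoint gpow {G : Grp} (g : G) (p : nat) : G :=
  match p with O => gone | S q => gmul g (gpow g q) end.

Definition gzpow {G : Grp} (g : G) (m : Z) : G :=
  match m with
  | Z0 => gone
  | Zpos q => gpow g (Pos.to_nat q)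
  | Zneg q => ginv (gpow g (Pos.to_nat q))
  end.

Definition is_subgroup {G : Grp} (H : G -> Prop) : Prop :=
  H gone /\ (forall a b, H a -> H b -> H (gmul a b)) /\ (forall a, H a -> H (ginv a)).

(* product of a word (list of (factor index, letter)) *)
Fixpoint word_prod {G : Grp} (w : list (nat * G)) : G :=
  match w with nil => gone | (_, a) :: w' => gmul a (word_prod w') end.

Fixpoint alternating {G : Grp} (w : list (nat * G)) : Prop :=
  match w with
  | (i, _) :: (((j, _) :: _) as w') => i <> j /\ alternating w'
  | _ => True
  end.

(* The factors of G = G_1 * ... * G_k * F_N, F_N = <x_0> * ... * <x_{N-1}>:
   index j < k gives G_j (here Gi j), index k + j (j < N) gives <x_j>. *)
Definition factor {G : Grp} (k : nat) (Gi : nat -> G -> Prop) (x : nat -> G)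
  (j : nat) (a : G) : Prop :=
  if Nat.ltb j k then Gi j a else exists m : Z, a = gzpow (x (j - k)%nat) m.

(* G is the internal free product G_0 * ... * G_{k-1} * F_N where F_N is
   free on x_0,...,x_{N-1}: the G_i are subgroups, the x_j have infinite
   order, the factors generate G, and every nonempty reduced word has
   nontrivial product (normal form theorem for free products). *)
Definition free_product_decomp (G : Grp) (k : nat) (Gi : nat -> G -> Prop)
  (N : nat) (x : nat -> G) : Prop :=
  (forall i, (i < k)%nat -> is_subgroup (Gi i)) /\
  (forall j, (j < N)%nat -> forall m : Z, m <> 0%Z -> gzpow (x j) m <> gone) /\
  (forall g : G, exists w : list (nat * G),
      (forall p, In p w -> (fst p < k + N)%nat /\ factor k Gi x (fst p) (snd p))
      /\ word_prod w = g) /\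
  (forall w : list (nat * G), w <> nil ->
      (forall p, In p w -> (fst p < k + N)%nat /\ factor k Gi x (fst p) (snd p)
                           /\ snd p <> gone) ->
      alternating w -> word_prod w <> gone).

Definition countable_type (A : Type) : Prop :=
  exists f : A -> nat, forall a b, f a = f b -> a = b.

Section Metric.
Variables (X : Type) (d : X -> X -> R).

Definition geodesic (x y : X) (s : R -> X) : Prop :=
  s 0 = x /\ s (d x y) = y /\
  forall u v, 0 <= u <= d x y -> 0 <= v <= d x y -> d (s u) (s v) = Rabs (u - v).

Definition arc (x y : X) (c : R -> X) : Prop :=
  c 0 = x /\ c 1 = y /\
  (forall u v, 0 <= u <= 1 -> 0 <= v <= 1 -> c u = c v -> u = v) /\
  (forall t, 0 <= t <= 1 -> forall eps, eps > 0 -> exists delta, delta > 0 /\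
     forall u, 0 <= u <= 1 -> Rabs (u - t) < delta -> d (c u) (c t) < eps).

Definition is_metric : Prop :=
  (forall x y, 0 <= d x y) /\ (forall x y, d x y = 0 <-> x = y) /\
  (forall x y, d x y = d y x) /\ (forall x y z, d x z <= d x y + d y z).

Definition is_Rtree : Prop :=
  is_metric /\
  (forall x y, exists s, geodesic x y s) /\
  (forall x y c s, arc x y c -> geodesic x y s ->
     forall z, (exists u, 0 <= u <= 1 /\ c u = z) <->
               (exists v, 0 <= v <= d x y /\ s v = z)).

Definition segment (x y z : X) : Prop := d x z + d z y = d x y.
End Metric.

Record GTree (G : Grp) := {
  tcar :> Type;
  tdist : tcar -> tcar -> R;
  tact : G -> tcar -> tcar;
  tree_Rtree : is_Rtree tcar tdist;
  tact_one : forall x, tact gone x = x;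
  tact_mul : forall g h x, tact (gmul g h) x = tact g (tact h x);
  tact_isom : forall g x y, tdist (tact g x) (tact g y) = tdist x y
}.
Arguments tdist {_} _. Arguments tact {_} _.

Definition GF_tree {G : Grp} (k : nat) (Gi : nat -> G -> Prop) (T : GTree G) : Prop :=
  forall i, (i < k)%nat -> forall g : G,
    exists x : T, (forall h, Gi i h -> tact T (gmul g (gmul h (ginv g))) x = x) /\
      forall y : T, (forall h, Gi i h -> tact T (gmul g (gmul h (ginv g))) y = y) -> y = x.

Definition subtree {G : Grp} (T : GTree G) (S : T -> Prop) : Prop :=
  (exists x, S x) /\
  forall x y z, S x -> S y -> segment T (tdist T) x y z -> S z.

Definition minimal_tree {G : Grp} (T : GTree G) : Prop :=
  forall S : T -> Prop, subtree T S -> (forall g x, S x -> S (tact T g x)) ->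
    forall x, S x.

Definition hyperbolic_in {G : Grp} (T : GTree G) (g : G) : Prop :=
  forall x : T, tact T g x <> x.

Definition fixes_arc {G : Grp} (T : GTree G) (g : G) (a b : T) : Prop :=
  forall z, segment T (tdist T) a b z -> tact T g z = z.

Definition GH_converges {G : Grp} (Tn : nat -> GTree G) (T : GTree G) : Prop :=
  forall (K : list T) (P : list G) (eps : R), eps > 0 ->
  exists n0 : nat, forall n, (n >= n0)%nat ->
  exists (Kn : list (Tn n)) (Rel : list (T * Tn n)),
    (forall q, In q Rel -> In (fst q) K /\ In (snd q) Kn) /\
    (forall x, In x K -> exists x', In (x, x') Rel) /\
    (forall x', In x' Kn -> exists x, In (x, x') Rel) /\
    (forall x x' y y' g h, In (x, x') Rel -> In (y, y') Rel -> In g P -> In h P ->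
       Rabs (tdist T (tact T g x) (tact T h y)
             - tdist (Tn n) (tact (Tn n) g x') (tact (Tn n) h y')) < eps).

(* Main.v *)
Require Import Defs.
From Stdlib Require Import Reals List Lra Lia Classical.
Open Scope R_scope.

Section Tree.
Variables (X : Type) (d : X -> X -> R).
Hypothesis HR : is_Rtree X d.

Definition gp (x y w : X) := (d w x + d w y - d x y) / 2.

Lemma d_nonneg x y : 0 <= d x y.
Proof. destruct HR as [[h _] _]; apply h. Qed.
Lemma d_eq x y : d x y = 0 <-> x = y.
Proof. destruct HR as [[_ [h _]] _]; apply h. Qed.
Lemma d_sym x y : d x y = d y x.
Proof. destruct HR as [[_ [_ [h _]]] _]; apply h. Qed.
Lemma d_tri x y z : d x z <= d x y + d y z.
Proof. destruct HR as [[_ [_ [_ h]]] _]; apply h. Qed.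
Lemma d_refl x : d x x = 0.
Proof. apply d_eq; reflexivity. Qed.

Lemma geo_dist x y s u : geodesic X d x y s -> 0 <= u <= d x y -> d x (s u) = u.
Proof.
  intros [h0 [h1 h2]] Hu.
  rewrite <- h0 at 1. rewrite (h2 0 u); [| lra | lra].
  rewrite Rabs_minus_sym, Rabs_pos_eq; lra.
Qed.

Lemma geo_dist2 x y s u : geodesic X d x y s -> 0 <= u <= d x y -> d (s u) y = d x y - u.
Proof.
  intros [h0 [h1 h2]] Hu.
  rewrite <- h1 at 1. rewrite (h2 u (d x y)); [| lra | pose proof (d_nonneg x y); lra].
  rewrite Rabs_minus_sym, Rabs_pos_eq; lra.
Qed.

Lemma geo_iso x y s u v : geodesic X d x y s -> 0 <= u <= d x y -> 0 <= v <= d x y ->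
  d (s u) (s v) = Rabs (u - v).
Proof. intros [_ [_ h]]; apply h. Qed.

Lemma prefix w x y s1 s2 t : geodesic X d w x s1 -> geodesic X d w y s2 ->
  0 <= t <= d w x -> t <= d w y -> s1 t = s2 t ->
  forall u, 0 <= u <= t -> s1 u = s2 u.
Proof.
  intros G1 G2 Ht Ht2 Heq u Hu.
  destruct (Req_dec t 0) as [Ht0|Ht0].
  { assert (u = 0) by lra. subst u. destruct G1 as [-> _]. destruct G2 as [-> _]. reflexivity. }
  set (p := s1 t).
  assert (Hdp : d w p = t) by (apply (geo_dist w x); auto).
  assert (Gp : geodesic X d w p s1).
  { split; [destruct G1; auto|]. split; [rewrite Hdp; reflexivity|].
    intros a b' Ha Hb. rewrite Hdp in Ha, Hb. apply (geo_iso w x); [exact G1|lra|lra]. }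
  assert (Ac : arc X d w p (fun v => s2 (v * t))).
  { split; [rewrite Rmult_0_l; destruct G2; auto|].
    split; [rewrite Rmult_1_l; symmetry; exact Heq|].
    split.
    - intros a b' Ha Hb E.
      assert (E2 : d (s2 (a*t)) (s2 (b'*t)) = 0) by (rewrite E; apply d_refl).
      rewrite (geo_iso w y) in E2.
      + destruct (Req_dec (a*t - b'*t) 0) as [Z|Z]; [|apply Rabs_pos_lt in Z; lra].
        assert ((a - b') * t = 0) by lra.
        apply Rmult_integral in H. destruct H; lra.
      + exact G2.
      + split; [apply Rmult_le_pos; lra|]. assert (a*t <= 1*t) by (apply Rmult_le_compat_r; lra). lra.
      + split; [apply Rmult_le_pos; lra|]. assert (b'*t <= 1*t) by (apply Rmult_le_compat_r; lra). lra.
    - intros t0 Ht0' eps Heps. exists (eps / t). split.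
      + apply Rdiv_lt_0_compat; lra.
      + intros u0 Hu0 Hlt.
        rewrite (geo_iso w y).
        * replace (u0 * t - t0 * t) with ((u0 - t0) * t) by ring.
          rewrite Rabs_mult, (Rabs_pos_eq t) by lra.
          apply (Rmult_lt_compat_r t) in Hlt; [|lra].
          unfold Rdiv in Hlt. rewrite Rmult_assoc, Rinv_l, Rmult_1_r in Hlt; lra.
        * exact G2.
        * split; [apply Rmult_le_pos; lra|]. assert (u0*t <= 1*t) by (apply Rmult_le_compat_r; lra). lra.
        * split; [apply Rmult_le_pos; lra|]. assert (t0*t <= 1*t) by (apply Rmult_le_compat_r; lra). lra. }
  destruct HR as [_ [_ Hax]].
  destruct (proj1 (Hax w p _ s1 Ac Gp (s2 u))) as [v [Hv Hsv]].
  { exists (u / t). split.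
    - split; [apply Rmult_le_pos; [lra| left; apply Rinv_0_lt_compat; lra]|].
      apply (Rmult_le_reg_r t); [lra|]. unfold Rdiv. rewrite Rmult_assoc, Rinv_l; lra.
    - unfold Rdiv. rewrite Rmult_assoc, Rinv_l, Rmult_1_r; [reflexivity|lra]. }
  assert (d w (s1 v) = v) by (apply (geo_dist w x); [exact G1|rewrite Hdp in Hv; lra]).
  assert (d w (s2 u) = u) by (apply (geo_dist w y); [exact G2|lra]).
  rewrite Hsv in H. assert (v = u) by lra. rewrite <- H1 at 1. exact Hsv.
Qed.


Lemma branch w x y s1 s2 : geodesic X d w x s1 -> geodesic X d w y s2 ->
  forall t, 0 <= t <= gp x y w -> s1 t = s2 t.
Proof.
  intros G1 G2.
  set (m := Rmin (d w x) (d w y)).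
  assert (HLx : 0 <= (d w x)) by apply d_nonneg.
  assert (HLy : 0 <= (d w y)) by apply d_nonneg.
  assert (Hm1 : m <= (d w x)) by apply Rmin_l.
  assert (Hm2 : m <= (d w y)) by apply Rmin_r.
  assert (Hm0 : 0 <= m) by (apply Rmin_glb; auto).
  set (E := fun t => 0 <= t <= m /\ s1 t = s2 t).
  assert (Hb : bound E) by (exists m; intros t [Ht _]; lra).
  assert (He : exists t, E t).
  { exists 0. split; [lra|]. destruct G1 as [-> _]. destruct G2 as [-> _]. reflexivity. }
  destruct (completeness E Hb He) as [ts [Hub Hlub]].
  assert (Hts0 : 0 <= ts) by (destruct He as [t0 Ht0]; pose proof (Hub t0 Ht0); destruct Ht0; lra).
  assert (Htsm : ts <= m) by (apply Hlub; intros t [Ht _]; lra).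
  assert (Hts : s1 ts = s2 ts).
  { apply NNPP; intro Hne.
    set (del := d (s1 ts) (s2 ts)).
    assert (Hdel : 0 < del).
    { destruct (d_nonneg (s1 ts) (s2 ts)) as [h|h]; [exact h|].
      exfalso; apply Hne; apply d_eq; symmetry; exact h. }
    destruct (classic (exists t, E t /\ ts - del/2 < t)) as [[t [[Ht Hst] Hlt]]|Hno].
    - assert (t <= ts) by (apply Hub; split; auto).
      pose proof (d_tri (s1 ts) (s1 t) (s2 ts)).
      rewrite Hst in H0 at 2.
      rewrite (geo_iso w x) in H0; [|exact G1|lra|lra].
      rewrite (geo_iso w y) in H0; [|exact G2|lra|lra].
      rewrite Rabs_pos_eq in H0 by lra. rewrite Rabs_minus_sym, Rabs_pos_eq in H0 by lra.
      unfold del in *. lra.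
    - assert (ts <= ts - del/2).
      { apply Hlub. intros t Et. destruct (Rle_dec t (ts - del/2)); auto.
        exfalso; apply Hno; exists t; split; auto; lra. }
      lra. }
  assert (Hform : d x y = (d w x) + (d w y) - 2 * ts).
  { set (A := (d w x) - ts). set (B := (d w y) - ts).
    assert (HA : 0 <= A) by (unfold A; lra).
    assert (HB : 0 <= B) by (unfold B; lra).
    destruct (Req_dec (A + B) 0) as [HL0|HL0].
    - assert (ts = (d w x)) by (unfold A, B in *; lra).
      assert (ts = (d w y)) by (unfold A, B in *; lra).
      assert (x = y).
      { destruct G1 as [_ [Ex _]]. destruct G2 as [_ [Ey _]].
        rewrite <- Ex, <- Ey, <- H, <- H0. exact Hts. }
      subst y. rewrite d_refl. lra.
    - set (L := A + B).
      assert (HL : 0 < L) by (unfold L in *; lra).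
      set (c := fun v => if Rle_dec (v * L) A then s1 ((d w x) - v * L) else s2 (ts + v * L - A)).
      assert (Hr1 : forall v, 0 <= v <= 1 -> v * L <= A -> 0 <= (d w x) - v * L <= (d w x) /\ ts <= (d w x) - v*L).
      { intros v Hv Hle. assert (0 <= v * L) by (apply Rmult_le_pos; lra). unfold A in Hle. lra. }
      assert (Hr2 : forall v, 0 <= v <= 1 -> ~ v * L <= A -> ts < ts + v * L - A <= (d w y)).
      { intros v Hv Hle. assert (v * L <= 1 * L) by (apply Rmult_le_compat_r; lra).
        unfold L, A, B in *. lra. }
      assert (Hlip : forall u v, 0 <= u <= 1 -> 0 <= v <= 1 -> d (c u) (c v) <= L * Rabs (u - v)).
      { assert (Hmix : forall u v, 0 <= u <= 1 -> 0 <= v <= 1 -> u * L <= A -> ~ v * L <= A ->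
           d (s1 ((d w x) - u * L)) (s2 (ts + v * L - A)) <= L * Rabs (u - v)).
        { intros u v Hu Hv H1 H2.
          destruct (Hr1 u Hu H1). destruct (Hr2 v Hv H2).
          pose proof (d_tri (s1 ((d w x) - u * L)) (s1 ts) (s2 (ts + v * L - A))).
          rewrite Hts in H5 at 2.
          rewrite (geo_iso w x) in H5; [|exact G1|lra|lra].
          rewrite (geo_iso w y) in H5; [|exact G2|lra|lra].
          rewrite Rabs_pos_eq in H5 by lra. rewrite Rabs_minus_sym, Rabs_pos_eq in H5 by lra.
          rewrite Rabs_minus_sym, Rabs_pos_eq.
          - assert (v * L > u * L) by lra.
            replace (L * (v - u)) with (v * L - u * L) by ring. unfold A in *; lra.
          - assert (v * L > u * L) by lra.
            destruct (Rle_dec u v); [lra|].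
            assert (v * L <= u * L) by (apply Rmult_le_compat_r; lra). lra. }
        intros u v Hu Hv. unfold c.
        destruct (Rle_dec (u * L) A) as [H1|H1]; destruct (Rle_dec (v * L) A) as [H2|H2].
        - destruct (Hr1 u Hu H1). destruct (Hr1 v Hv H2).
          rewrite (geo_iso w x); [|exact G1|lra|lra].
          replace ((d w x) - u * L - ((d w x) - v * L)) with (L * (v - u)) by ring.
          rewrite Rabs_mult, (Rabs_pos_eq L), Rabs_minus_sym by lra. lra.
        - apply Hmix; auto.
        - rewrite d_sym, Rabs_minus_sym. apply Hmix; auto.
        - destruct (Hr2 u Hu H1). destruct (Hr2 v Hv H2).
          rewrite (geo_iso w y); [|exact G2|lra|lra].
          replace (ts + u * L - A - (ts + v * L - A)) with (L * (u - v)) by ring.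
          rewrite Rabs_mult, (Rabs_pos_eq L) by lra. lra. }
      assert (Harc : arc X d x y c).
      { split; [|split; [|split]].
        - unfold c. destruct (Rle_dec (0 * L) A) as [_|h]; [|exfalso; apply h; lra].
          replace ((d w x) - 0 * L) with (d w x) by ring. destruct G1 as [_ [h _]]; exact h.
        - unfold c. destruct (Rle_dec (1 * L) A) as [h|h].
          + assert (B = 0) by (unfold L in h; lra).
            replace ((d w x) - 1 * L) with ts by (unfold L, A, B in *; lra).
            rewrite Hts. replace ts with (d w y) by (unfold B in *; lra).
            destruct G2 as [_ [h' _]]; exact h'.
          + replace (ts + 1 * L - A) with (d w y) by (unfold L, A, B; ring).
            destruct G2 as [_ [h' _]]; exact h'.
        - intros u v Hu Hv Huv. unfold c in Huv.
          destruct (Rle_dec (u * L) A) as [H1|H1]; destruct (Rle_dec (v * L) A) as [H2|H2].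
          + destruct (Hr1 u Hu H1). destruct (Hr1 v Hv H2).
            assert (Z : d (s1 ((d w x) - u * L)) (s1 ((d w x) - v * L)) = 0) by (rewrite Huv; apply d_refl).
            rewrite (geo_iso w x) in Z; [|exact G1|lra|lra].
            destruct (Req_dec ((d w x) - u * L - ((d w x) - v * L)) 0) as [Z'|Z']; [|apply Rabs_pos_lt in Z'; lra].
            apply (Rmult_eq_reg_r L); lra.
          + exfalso. destruct (Hr1 u Hu H1). destruct (Hr2 v Hv H2).
            assert (e1 : d w (s1 ((d w x) - u * L)) = (d w x) - u * L) by (apply (geo_dist w x); [exact G1|lra]).
            assert (e2 : d w (s2 (ts + v * L - A)) = ts + v * L - A) by (apply (geo_dist w y); [exact G2|lra]).
            rewrite Huv in e1. rewrite e1 in e2.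
            assert (E (ts + v * L - A)).
            { unfold E. split; [split; [lra|unfold m; apply Rmin_glb; lra]|].
              rewrite <- e2 at 1. exact Huv. }
            apply Hub in H5. lra.
          + exfalso. destruct (Hr2 u Hu H1). destruct (Hr1 v Hv H2).
            assert (e1 : d w (s1 ((d w x) - v * L)) = (d w x) - v * L) by (apply (geo_dist w x); [exact G1|lra]).
            assert (e2 : d w (s2 (ts + u * L - A)) = ts + u * L - A) by (apply (geo_dist w y); [exact G2|lra]).
            rewrite <- Huv in e1. rewrite e1 in e2.
            assert (E (ts + u * L - A)).
            { unfold E. split; [split; [lra|unfold m; apply Rmin_glb; lra]|].
              rewrite <- e2 at 1. symmetry; exact Huv. }
            apply Hub in H5. lra.
          + destruct (Hr2 u Hu H1). destruct (Hr2 v Hv H2).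
            assert (Z : d (s2 (ts + u * L - A)) (s2 (ts + v * L - A)) = 0) by (rewrite Huv; apply d_refl).
            rewrite (geo_iso w y) in Z; [|exact G2|lra|lra].
            destruct (Req_dec (ts + u * L - A - (ts + v * L - A)) 0) as [Z'|Z']; [|apply Rabs_pos_lt in Z'; lra].
            apply (Rmult_eq_reg_r L); lra.
        - intros t Ht eps Heps. exists (eps / L). split; [apply Rdiv_lt_0_compat; lra|].
          intros u Hu Hlt. eapply Rle_lt_trans; [apply Hlip; auto|].
          apply (Rmult_lt_compat_l L) in Hlt; [|lra].
          replace (L * (eps / L)) with eps in Hlt by (field; lra). lra. }
      destruct HR as [_ [Hgeo Hax]].
      destruct (Hgeo x y) as [s Gs].
      destruct (proj1 (Hax x y c s Harc Gs (s1 ts))) as [v [Hv Hsv]].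
      { exists (A / L). split.
        - split; [apply Rmult_le_pos; [lra| left; apply Rinv_0_lt_compat; lra]|].
          apply (Rmult_le_reg_r L); [lra|]. unfold Rdiv. rewrite Rmult_assoc, Rinv_l; [|lra].
          unfold L; lra.
        - unfold c. replace (A / L * L) with A by (field; lra).
          destruct (Rle_dec A A) as [_|h]; [|lra]. f_equal. unfold A; ring. }
      assert (e1 : d x (s v) = v) by (apply (geo_dist x y); [exact Gs|lra]).
      assert (e2 : d (s v) y = d x y - v) by (apply (geo_dist2 x y); [exact Gs|lra]).
      rewrite Hsv in e1, e2.
      assert (e3 : d x (s1 ts) = A).
      { rewrite d_sym. destruct G1 as [g0 [g1 g2]].
        rewrite <- g1 at 1. rewrite g2; [|lra|lra].
        rewrite Rabs_minus_sym, Rabs_pos_eq; unfold A; lra. }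
      assert (e4 : d (s1 ts) y = B).
      { rewrite Hts. destruct G2 as [g0 [g1 g2]].
        rewrite <- g1 at 1. rewrite g2; [|lra|lra].
        rewrite Rabs_minus_sym, Rabs_pos_eq; unfold B; lra. }
      unfold A, B in *. lra. }
  intros t Ht.
  apply (prefix w x y s1 s2 ts G1 G2); [lra|lra|exact Hts|].
  unfold gp in Ht. lra.
Qed.


Lemma gp_le x y w : gp x y w <= d w x.
Proof. unfold gp. pose proof (d_tri w x y). lra. Qed.
Lemma gp_nonneg x y w : 0 <= gp x y w.
Proof. unfold gp. pose proof (d_tri x w y). rewrite (d_sym x w) in H. lra. Qed.
Lemma gp_sym x y w : gp x y w = gp y x w.
Proof. unfold gp. rewrite (d_sym x y). lra. Qed.

Lemma four_point x y z w : Rmin (gp x y w) (gp y z w) <= gp x z w.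
Proof.
  destruct HR as [_ [Hgeo _]].
  destruct (Hgeo w x) as [sx Gx]. destruct (Hgeo w y) as [sy Gy]. destruct (Hgeo w z) as [sz Gz].
  set (t := Rmin (gp x y w) (gp y z w)).
  assert (t <= gp x y w) by apply Rmin_l.
  assert (t <= gp y z w) by apply Rmin_r.
  assert (0 <= t) by (apply Rmin_glb; apply gp_nonneg).
  assert (e1 : sx t = sy t) by (apply (branch w x y); auto).
  assert (e2 : sy t = sz t) by (apply (branch w y z); auto).
  pose proof (gp_le x y w). pose proof (gp_le z y w). rewrite <- gp_sym in H3.
  pose proof (d_tri x (sx t) z).
  rewrite (d_sym x (sx t)), (geo_dist2 w x) in H4; [|exact Gx|lra].
  rewrite e1, e2 in H4.
  rewrite (geo_dist2 w z) in H4; [|exact Gz|lra].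
  unfold gp in *. lra.
Qed.

End Tree.

Lemma min_gt_le a b c : Rmin a b <= c -> a > c -> b <= c.
Proof. unfold Rmin. destruct (Rle_dec a b); lra. Qed.

Section GT.
Variables (G : Grp) (T : GTree G).
Let HR := tree_Rtree G T.
Local Notation d := (tdist T).

Lemma fixpt (g : G) (y : T) :
  d y (tact T g (tact T g y)) <= d y (tact T g y) -> exists m, tact T g m = m.
Proof.
  intros He.
  set (gy := tact T g y). set (ggy := tact T g gy).
  set (D := d y gy).
  destruct HR as [_ [Hgeo _]]. destruct (Hgeo y gy) as [s Gs].
  assert (HD : 0 <= D) by apply (d_nonneg _ _ HR).
  set (m := s (D/2)).
  assert (e1 : d y m = D/2) by (apply (geo_dist _ _ y gy); [exact Gs| unfold D in *; lra]).
  assert (e2 : d m gy = D/2) by (unfold m; rewrite (geo_dist2 _ _ HR y gy); [unfold D; lra|exact Gs|unfold D in *; lra]).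
  assert (e3 : d gy (tact T g m) = D/2) by (unfold gy; rewrite tact_isom; exact e1).
  assert (e4 : d ggy (tact T g m) = D/2) by (unfold ggy; rewrite tact_isom, (d_sym _ _ HR); exact e2).
  assert (e5 : d gy ggy = D) by (unfold ggy, gy; rewrite tact_isom; reflexivity).
  exists m.
  pose proof (four_point _ _ HR m y ggy gy) as F1.
  pose proof (four_point _ _ HR m ggy (tact T g m) gy) as F2.
unfold gp in F1, F2.
  assert (s1 : d gy m = D/2) by (rewrite (d_sym _ _ HR); exact e2).
  assert (s2 : d gy y = D) by (rewrite (d_sym _ _ HR); reflexivity).
  assert (s3 : d m y = D/2) by (rewrite (d_sym _ _ HR); exact e1).
  assert (s4 : d ggy (tact T g m) = D/2) by exact e4.
  rewrite s1, s2, s3, e5 in F1.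
  assert (F1' : D/2 <= (D/2 + D - d m ggy) / 2).
  { eapply Rle_trans; [|exact F1]. apply Rmin_glb; [lra|]. change (d y ggy <= D) in He. lra. }
  rewrite s1, e5, e3, e4 in F2.
  assert (F2' : D/2 <= (D/2 + D/2 - d m (tact T g m)) / 2).
  { eapply Rle_trans; [|exact F2]. apply Rmin_glb; lra. }
  assert (Z : d m (tact T g m) <= 0) by lra.
  symmetry. apply (d_eq _ _ HR). pose proof (d_nonneg _ _ HR m (tact T g m)). lra.
Qed.


Definition orb (g : G) (y : T) (k : nat) : T := Nat.iter k (tact T g) y.

Lemma orb_shift g y i j k : d (orb g y (k + i)) (orb g y (k + j)) = d (orb g y i) (orb g y j).
Proof.
  induction k; [reflexivity|].
  simpl. unfold orb in *. simpl. rewrite tact_isom. exact IHk.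
Qed.

Lemma orb_pow g y n : tact T (gpow g n) y = orb g y n.
Proof.
  induction n; simpl.
  - apply tact_one.
  - rewrite tact_mul, IHn. reflexivity.
Qed.

Lemma chain g : hyperbolic_in T g -> forall y n, (n >= 1)%nat ->
  d y (tact T g y) <= d y (tact T (gpow g n) y).
Proof.
  intros Hh y n Hn.
  set (D := d (orb g y 0) (orb g y 1)).
  set (e := d (orb g y 0) (orb g y 2)).
  assert (HD : 0 <= D) by apply (d_nonneg _ _ HR).
  assert (He : D < e).
  { destruct (Rlt_dec D e) as [h|h]; [exact h|].
    exfalso. destruct (fixpt g y) as [m Hm].
    - unfold D, e, orb in h. simpl in h. lra.
    - exact (Hh m Hm). }
  set (c := (D + D - e) / 2).
  revert n Hn. intros nn Hnn.
  assert (P : forall n, d (orb g y 0) (orb g y (S n)) = D + INR n * (e - D) /\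
                        gp T d (orb g y 0) (orb g y n) (orb g y (S n)) > c).
  { induction n as [|n IH].
    - split; [unfold D; simpl INR; lra|].
      unfold gp. rewrite (d_refl _ _ HR). rewrite (d_sym _ _ HR (orb g y 1)). unfold c. fold D. lra.
    - destruct IH as [IH1 IH2].
      pose proof (orb_shift g y 0 1 n) as f1. rewrite Nat.add_0_r, Nat.add_1_r in f1. fold D in f1.
      pose proof (orb_shift g y 0 1 (S n)) as f2. rewrite Nat.add_0_r, Nat.add_1_r in f2. fold D in f2.
      pose proof (orb_shift g y 0 2 n) as f3. rewrite Nat.add_0_r in f3. fold e in f3.
      replace (n + 2)%nat with (S (S n)) in f3 by lia.
      pose proof (four_point _ _ HR (orb g y 0) (orb g y n) (orb g y (S (S n))) (orb g y (S n))) as F1.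
      pose proof (four_point _ _ HR (orb g y n) (orb g y 0) (orb g y (S (S n))) (orb g y (S n))) as F2.
      assert (Hc : gp T d (orb g y n) (orb g y (S (S n))) (orb g y (S n)) = c).
      { unfold gp, c. rewrite (d_sym _ _ HR (orb g y (S n)) (orb g y n)), f1, f2, f3. lra. }
      rewrite Hc in F1, F2. rewrite (gp_sym _ _ HR (orb g y n)) in F2.
      apply min_gt_le in F2; [|exact IH2].
      assert (F1' : c <= gp T d (orb g y 0) (orb g y (S (S n))) (orb g y (S n))).
      { eapply Rle_trans; [|exact F1]. apply Rmin_glb; lra. }
      assert (X : gp T d (orb g y 0) (orb g y (S (S n))) (orb g y (S n)) = c) by lra.
      unfold gp, c in X, IH2. unfold gp, c.
      rewrite (d_sym _ _ HR (orb g y (S n)) (orb g y 0)), f2 in X.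
      rewrite (d_sym _ _ HR (orb g y (S (S n))) (orb g y 0)).
      rewrite (d_sym _ _ HR (orb g y (S (S n))) (orb g y (S n))), f2.
      rewrite S_INR.
      split; lra. }
  destruct nn as [|n]; [lia|].
  rewrite orb_pow. destruct (P n) as [P1 _].
  change (d (orb g y 0) (orb g y 1) <= d (orb g y 0) (orb g y (S n))).
  fold D. rewrite P1. pose proof (pos_INR n).
  assert (0 <= INR n * (e - D)) by (apply Rmult_le_pos; lra). lra.
Qed.

End GT.

Theorem lemma2p3 (G : Grp) (k : nat) (Gi : nat -> G -> Prop) (N : nat) (x : nat -> G)
  (HG : free_product_decomp G k Gi N x) (Hcount : countable_type G)
  (T : GTree G) (HT : GF_tree k Gi T) (HTmin : minimal_tree T)
  (Tn : nat -> GTree G)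
  (HTn : forall n, GF_tree k Gi (Tn n) /\ minimal_tree (Tn n))
  (Hconv : GH_converges Tn T)
  (g : G) (p : nat) (Hp : (p >= 1)%nat) (a b : T) (Hab : a <> b)
  (Hfix : fixes_arc T (gpow g p) a b)
  (Hhyp : exists n0 : nat, forall n, (n >= n0)%nat -> hyperbolic_in (Tn n) g) :
  fixes_arc T g a b.
Proof.
  intros z Hz. apply NNPP; intro Hne.
  set (D := tdist T z (tact T g z)).
  assert (HD : 0 < D).
  { destruct (d_nonneg _ _ (tree_Rtree G T) z (tact T g z)) as [h|h]; [exact h|].
    exfalso. apply Hne. symmetry. apply (d_eq _ _ (tree_Rtree G T)). symmetry. exact h. }
  destruct Hhyp as [n0 Hn0].
  destruct (Hconv (z :: nil) (gone :: g :: gpow g p :: nil) (D/2)) as [n1 Hn1]; [lra|].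
  destruct (Hn1 (max n0 n1)) as [Kn [Rel [R1 [R2 [R3 R4]]]]]; [lia|].
  destruct (R2 z) as [z' Hz']; [simpl; auto|].
  pose proof (R4 z z' z z' gone g Hz' Hz' ltac:(simpl; auto) ltac:(simpl; auto)) as A1.
  pose proof (R4 z z' z z' gone (gpow g p) Hz' Hz' ltac:(simpl; auto) ltac:(simpl; auto)) as A2.
  rewrite !tact_one in A1, A2.
  rewrite (Hfix z Hz), (d_refl _ _ (tree_Rtree G T)) in A2.
  pose proof (chain G (Tn (max n0 n1)) g (Hn0 (max n0 n1) ltac:(lia)) z' p Hp) as C.
  fold D in A1.
  apply Rabs_def2 in A1. apply Rabs_def2 in A2. lra.
Qed.
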